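(* Let $H_n=\sum_{j=1}^n\frac1j$, let $\gamma$ be the Euler–Mascheroni constant, $\Gamma$ the gamma function, and $z^{\overline{k}} = z(z+1) \cdots (z + k -1)$ the rising factorial. Then: (i) for $k \in \{1 ,2, \ldots\}$, $$\sum_{n=1}^\infty (-1)^n \left(H_n - \log\sqrt[k]{n^{\overline{k}}} - \gamma \right) = \frac{\gamma}{2} - \frac{\log(\pi)}{2k} + \frac{1}{k}\log\Gamma\left(\frac{k+1}{2}\right);$$ (ii) for $x > 0$, $$\sum_{n=1}^\infty (-1)^n \left(H_n - \log(n + x -1) - \gamma \right) = \frac{\gamma}{2} + \log\left[\frac{\Gamma\left(\frac{x + 1}{2}\right)}{\Gamma \left(\frac{x}{2}\right)} \right].$$ *)

(* Defs.v *)
From Stdlib Require Import Reals.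
From Coquelicot Require Import Coquelicot.
Open Scope R_scope.

Fixpoint harmonic (n : nat) : R :=
  match n with
  | O => 0
  | S m => harmonic m + / INR (S m)
  end.

Definition euler_gamma : R :=
  real (Lim_seq (fun n => harmonic n - ln (INR n))).

Definition Gamma (x : R) : R :=
  RInt_gen (fun t => Rpower t (x - 1) * exp (- t))
           (at_right 0) (Rbar_locally p_infty).

Fixpoint rising (z : R) (k : nat) : R :=
  match k with
  | O => 1
  | S m => rising z m * (z + INR m)
  end.

(* Main.v *)
Require Import Defs.
From Stdlib Require Import Reals Lra Lia Psatz Classical ZArith.
From Coquelicot Require Import Coquelicot.
Open Scope R_scope.


Lemma gen_pos_ex (f : R -> R) (M : R) :
  (forall a b, 0 < a -> a <= b -> ex_RInt f a b) ->
  (forall t, 0 < t -> 0 <= f t) ->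
  (forall a b, 0 < a -> a <= b -> RInt f a b <= M) ->
  ex_RInt_gen f (at_right 0) (Rbar_locally p_infty).
Proof.
  intros Hex Hpos HM.
  set (E := fun v => exists a b, 0 < a /\ a <= b /\ v = RInt f a b).
  assert (HB : bound E).
  { exists M. intros v [a [b [Ha [Hab ->]]]]. now apply HM. }
  assert (HE : exists v, E v).
  { exists (RInt f 1 1). exists 1, 1. repeat split; lra. }
  destruct (completeness E HB HE) as [L [HL1 HL2]].
  exists L.
  intros P [eps Heps].
  assert (Hx : exists a0 b0, 0 < a0 /\ a0 <= b0 /\ L - eps < RInt f a0 b0).
  { apply NNPP. intros Hn.
    assert (L <= L - eps).
    { apply HL2. intros v [a [b [Ha [Hab ->]]]].
      apply Rnot_lt_le. intros Hc. apply Hn. exists a, b. auto. }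
    destruct eps; simpl in *; lra. }
  destruct Hx as [a0 [b0 [Ha0 [Hab0 Hl0]]]].
  apply (Filter_prod _ _ _ (fun a => 0 < a < a0) (fun b => b0 < b)).
  - exists (mkposreal a0 Ha0). intros y Hy Hy0. split; auto.
    unfold ball in Hy; simpl in Hy; unfold AbsRing_ball, abs, minus, plus, opp in Hy; simpl in Hy.
    apply Rabs_lt_between in Hy. lra.
  - exists b0. auto.
  - intros a b [Ha Haa] Hb. simpl.
    exists (RInt (V:=R_CompleteNormedModule) f a b). split.
    + apply (RInt_correct (V:=R_CompleteNormedModule)). apply Hex; lra.
    + apply Heps.
      assert (Hle : RInt f a b <= L).
      { apply HL1. exists a, b. repeat split; lra. }
      assert (Hge : RInt f a0 b0 <= RInt f a b).
      { rewrite <- (RInt_Chasles (V:=R_CompleteNormedModule) f a a0 b) by (apply Hex; lra).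
        rewrite <- (RInt_Chasles (V:=R_CompleteNormedModule) f a0 b0 b) by (apply Hex; lra).
        assert (0 <= RInt f a a0).
        { apply RInt_ge_0; try lra. apply Hex; lra. intros x Hx; apply Hpos; lra. }
        assert (0 <= RInt f b0 b).
        { apply RInt_ge_0; try lra. apply Hex; lra. intros x Hx; apply Hpos; lra. }
        unfold plus; simpl. lra. }
      unfold ball; simpl; unfold AbsRing_ball, abs, minus, plus, opp; simpl.
      apply Rabs_lt_between. lra.
Qed.


Lemma nat_above (x : R) : exists n : nat, x <= INR n.
Proof.
  destruct (archimed x) as [H1 H2].
  destruct (Z_le_gt_dec 0 (up x)) as [Hz|Hz].
  - exists (Z.to_nat (up x)). rewrite INR_IZR_INZ, Z2Nat.id by lia. lra.
  - exists 0%nat. simpl. assert (Hz2 : (up x < 0)%Z) by lia. apply IZR_lt in Hz2. lra.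
Qed.

Lemma pow_le_fact_exp (t : R) (n : nat) : 0 <= t -> t ^ n <= INR (fact n) * exp t.
Proof.
  intros Ht.
  assert (Hf : 0 < INR (fact n)) by (apply lt_0_INR, lt_O_fact).
  assert (H := exp_ge_taylor t n Ht).
  destruct n as [|m].
  - simpl. assert (1 <= exp t). { pose proof (exp_ineq1_le t). lra. } lra.
  - rewrite tech5 in H.
    assert (0 <= sum_f_R0 (fun k => t ^ k / INR (fact k)) m).
    { apply cond_pos_sum. intros k. apply Rmult_le_pos. apply pow_le; auto.
      apply Rlt_le, Rinv_0_lt_compat, lt_0_INR, lt_O_fact. }
    assert (t ^ S m / INR (fact (S m)) <= exp t) by lra.
    unfold Rdiv in H1. apply (Rmult_le_compat_l (INR (fact (S m)))) in H1; [|lra].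
    rewrite <- Rmult_assoc, (Rmult_comm _ (t ^ S m)), Rmult_assoc, Rinv_r, Rmult_1_r in H1; lra.
Qed.

Lemma exp_le_exp a b : a <= b -> exp a <= exp b.
Proof. intros [H|H]. left; apply exp_increasing; auto. subst; lra. Qed.

Definition gi (s t : R) : R := Rpower t (s - 1) * exp (- t).

Lemma gi_pos s t : 0 <= gi s t.
Proof. unfold gi, Rpower. apply Rlt_le, Rmult_lt_0_compat; apply exp_pos. Qed.

Lemma gi_cont s t : 0 < t -> continuous (gi s) t.
Proof.
  intros Ht. apply (ex_derive_continuous (K:=R_AbsRing) (V:=R_NormedModule)).
  unfold gi, Rpower. auto_derive. auto.
Qed.

Lemma gi_ex s a b : 0 < a -> a <= b -> ex_RInt (gi s) a b.
Proof.
  intros Ha Hab. apply (ex_RInt_continuous (V:=R_CompleteNormedModule)).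
  intros z Hz. rewrite Rmin_left in Hz by lra. apply gi_cont. lra.
Qed.

Lemma RInt_mono_dom (f : R -> R) a' a b b' :
  (forall a b, 0 < a -> a <= b -> ex_RInt f a b) ->
  (forall t, 0 < t -> 0 <= f t) ->
  0 < a' -> a' <= a -> a <= b -> b <= b' ->
  RInt f a b <= RInt f a' b'.
Proof.
  intros Hex Hpos H1 H2 H3 H4.
  rewrite <- (RInt_Chasles (V:=R_CompleteNormedModule) f a' a b') by (apply Hex; lra).
  rewrite <- (RInt_Chasles (V:=R_CompleteNormedModule) f a b b') by (apply Hex; lra).
  assert (0 <= RInt f a' a).
  { apply RInt_ge_0; try lra. apply Hex; lra. intros x Hx; apply Hpos; lra. }
  assert (0 <= RInt f b b').
  { apply RInt_ge_0; try lra. apply Hex; lra. intros x Hx; apply Hpos; lra. }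
  unfold plus; simpl. lra.
Qed.

Lemma gi_pt_bound s n t : s + 1 <= INR n -> 1 <= t -> gi s t * t ^ 2 <= INR (fact n).
Proof.
  intros Hn Ht.
  assert (E2 : t ^ 2 = exp (2 * ln t)).
  { rewrite <- (Rpower_pow 2 t) by lra. unfold Rpower. replace (INR 2) with 2 by (simpl; ring). reflexivity. }
  assert (En : t ^ n = exp (INR n * ln t)).
  { rewrite <- (Rpower_pow n t) by lra. reflexivity. }
  assert (Hl : 0 <= ln t).
  { rewrite <- ln_1. apply ln_le; lra. }
  unfold gi, Rpower. rewrite E2.
  replace (exp ((s - 1) * ln t) * exp (- t) * exp (2 * ln t))
    with (exp ((s + 1) * ln t) * exp (- t)).
  2:{ replace ((s+1)*ln t) with ((s-1)*ln t + 2*ln t) by ring. rewrite exp_plus. ring. }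
  assert (exp ((s + 1) * ln t) <= t ^ n).
  { rewrite En. apply exp_le_exp. apply Rmult_le_compat_r; auto. }
  assert (t ^ n * exp (- t) <= INR (fact n)).
  { pose proof (pow_le_fact_exp t n ltac:(lra)).
    assert (exp (-t) * exp t = 1) by (rewrite <- exp_plus, Rplus_opp_l; apply exp_0).
    pose proof (exp_pos (-t)).
    replace (INR (fact n)) with (INR (fact n) * exp t * exp (- t)) by (rewrite Rmult_assoc, (Rmult_comm (exp t)), H1; ring).
    apply Rmult_le_compat_r; lra. }
  pose proof (exp_pos (-t)).
  apply Rle_trans with (t ^ n * exp (- t)); auto.
  apply Rmult_le_compat_r; lra.
Qed.

Lemma gi_int_bound_low s a : 0 < s -> 0 < a -> a <= 1 -> RInt (gi s) a 1 <= / s.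
Proof.
  intros Hs Ha Ha1.
  assert (HI : is_RInt (fun t => exp ((s - 1) * ln t)) a 1
                 (minus (exp (s * ln 1) / s) (exp (s * ln a) / s))).
  { apply (is_RInt_derive (V:=R_CompleteNormedModule) (fun t => exp (s * ln t) / s)).
    - intros x Hx. rewrite Rmin_left, Rmax_right in Hx by lra.
      auto_derive. lra.
      replace ((s - 1) * ln x) with (s * ln x + - ln x) by ring.
      rewrite exp_plus, exp_Ropp, exp_ln by lra. field. split; lra.
    - intros x Hx. rewrite Rmin_left, Rmax_right in Hx by lra.
      apply (ex_derive_continuous (K:=R_AbsRing) (V:=R_NormedModule)). auto_derive. lra. }
  apply (is_RInt_unique (V:=R_CompleteNormedModule)) in HI.
  apply Rle_trans with (RInt (fun t => exp ((s - 1) * ln t)) a 1).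
  - apply RInt_le; auto. apply gi_ex; lra.
    apply (ex_RInt_continuous (V:=R_CompleteNormedModule)).
    intros z Hz. rewrite Rmin_left, Rmax_right in Hz by lra.
    apply (ex_derive_continuous (K:=R_AbsRing) (V:=R_NormedModule)). auto_derive. lra.
    intros x Hx. unfold gi, Rpower. pose proof (exp_pos ((s-1) * ln x)).
    rewrite <- (Rmult_1_r (exp ((s - 1) * ln x))) at 2.
    apply Rmult_le_compat_l. lra.
    rewrite <- exp_0. apply exp_le_exp. lra.
  - rewrite HI. unfold minus, plus, opp; simpl. rewrite ln_1, Rmult_0_r, exp_0.
    pose proof (exp_pos (s * ln a)).
    assert (0 < exp (s * ln a) / s) by (apply Rdiv_lt_0_compat; lra).
    unfold Rdiv in *. lra.
Qed.

Lemma gi_int_bound_high s n b : s + 1 <= INR n -> 1 <= b -> RInt (gi s) 1 b <= INR (fact n).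
Proof.
  intros Hn Hb.
  set (C := INR (fact n)).
  assert (HC : 0 < C) by (apply lt_0_INR, lt_O_fact).
  assert (HI : is_RInt (fun t => C / t ^ 2) 1 b (minus (- C / b) (- C / 1))).
  { apply (is_RInt_derive (V:=R_CompleteNormedModule) (fun t => - C / t)).
    - intros x Hx. rewrite Rmin_left, Rmax_right in Hx by lra.
      auto_derive. lra. field. lra.
    - intros x Hx. rewrite Rmin_left, Rmax_right in Hx by lra.
      apply (ex_derive_continuous (K:=R_AbsRing) (V:=R_NormedModule)). auto_derive. nra. }
  apply (is_RInt_unique (V:=R_CompleteNormedModule)) in HI.
  apply Rle_trans with (RInt (fun t => C / t ^ 2) 1 b).
  - apply RInt_le; auto. apply gi_ex; lra.
    apply (ex_RInt_continuous (V:=R_CompleteNormedModule)).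
    intros z Hz. rewrite Rmin_left, Rmax_right in Hz by lra.
    apply (ex_derive_continuous (K:=R_AbsRing) (V:=R_NormedModule)). auto_derive. nra.
    intros x Hx. pose proof (gi_pt_bound s n x Hn ltac:(lra)).
    apply Rmult_le_reg_r with (x ^ 2). nra.
    unfold Rdiv. rewrite Rmult_assoc, Rinv_l by nra. fold C in H. lra.
  - rewrite HI. unfold minus, plus, opp; simpl.
    assert (0 < C / b) by (apply Rdiv_lt_0_compat; lra).
    unfold Rdiv in *. lra.
Qed.



Lemma Gamma_ex s : 0 < s -> ex_RInt_gen (gi s) (at_right 0) (Rbar_locally p_infty).
Proof.
  intros Hs.
  destruct (nat_above (s + 1)) as [n Hn].
  apply (gen_pos_ex (gi s) (/ s + INR (fact n))).
  - intros; apply gi_ex; auto.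
  - intros; apply gi_pos.
  - intros a b Ha Hab.
    apply Rle_trans with (RInt (gi s) (Rmin a 1) (Rmax b 1)).
    + apply RInt_mono_dom.
      * intros; apply gi_ex; auto.
      * intros; apply gi_pos.
      * apply Rmin_glb_lt; lra.
      * apply Rmin_l.
      * auto.
      * apply Rmax_l.
    + rewrite <- (RInt_Chasles (V:=R_CompleteNormedModule) (gi s) _ 1 _).
      * unfold plus; simpl. apply Rplus_le_compat.
        apply gi_int_bound_low; auto. apply Rmin_glb_lt; lra. apply Rmin_r.
        apply gi_int_bound_high; auto. apply Rmax_r.
      * apply gi_ex. apply Rmin_glb_lt; lra. apply Rmin_r.
      * apply gi_ex. lra. apply Rmax_r.
Qed.

Lemma gen_lower (f : R -> R) (l : R) a0 b0 :
  (forall a b, 0 < a -> a <= b -> ex_RInt f a b) ->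
  (forall t, 0 < t -> 0 <= f t) ->
  is_RInt_gen f (at_right 0) (Rbar_locally p_infty) l ->
  0 < a0 -> a0 <= b0 -> RInt f a0 b0 <= l.
Proof.
  intros Hex Hpos H Ha0 Hab0.
  apply Rnot_lt_le. intros Hlt.
  set (c := RInt f a0 b0) in *.
  assert (Heps : 0 < c - l) by lra.
  specialize (H (fun y => Rabs (y - l) < c - l)).
  destruct H as [Q R' HQ HR HP].
  { exists (mkposreal _ Heps). intros y Hy. apply Hy. }
  destruct HQ as [d Hd]. destruct HR as [M HM].
  set (a := Rmin (d / 2) a0).
  assert (Ha : 0 < a) by (apply Rmin_glb_lt; destruct d; simpl; lra).
  assert (Haa : a <= a0) by apply Rmin_r.
  set (b := Rmax (M + 1) b0).
  assert (Hbb : b0 <= b) by apply Rmax_r.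
  assert (HQa : Q a).
  { apply Hd; auto. unfold ball; simpl; unfold AbsRing_ball, abs, minus, plus, opp; simpl.
    assert (a <= d / 2) by apply Rmin_l. destruct d; simpl in *.
    rewrite Rabs_right; lra. }
  assert (HRb : R' b).
  { apply HM. assert (M + 1 <= b) by apply Rmax_l. lra. }
  destruct (HP a b HQa HRb) as [y [Hy1 Hy2]]. simpl in Hy1.
  apply (is_RInt_unique (V:=R_CompleteNormedModule)) in Hy1.
  assert (c <= RInt f a b) by (apply RInt_mono_dom; auto; lra).
  rewrite Hy1 in H. apply Rabs_lt_between in Hy2. lra.
Qed.

Lemma Gamma_is s : 0 < s -> is_RInt_gen (gi s) (at_right 0) (Rbar_locally p_infty) (Gamma s).
Proof.
  intros Hs. unfold Gamma.
  apply (RInt_gen_correct (V:=R_CompleteNormedModule)).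
  apply Gamma_ex; auto.
Qed.

Lemma Gamma_pos s : 0 < s -> 0 < Gamma s.
Proof.
  intros Hs.
  apply Rlt_le_trans with (RInt (gi s) 1 2).
  - replace 0 with (RInt (fun _ => 0) 1 2).
    2:{ rewrite RInt_const. unfold scal; simpl; unfold mult; simpl. ring. }
    apply RInt_lt. lra.
    intros; apply gi_cont; lra.
    intros; apply continuous_const.
    intros x Hx. unfold gi, Rpower. apply Rmult_lt_0_compat; apply exp_pos.
  - apply (gen_lower (gi s)); try lra.
    intros; apply gi_ex; auto. intros; apply gi_pos. apply Gamma_is; auto.
Qed.

Lemma gen_ge0 (f : R -> R) (l : R) :
  (forall a b, 0 < a -> a <= b -> ex_RInt f a b) ->
  (forall t, 0 < t -> 0 <= f t) ->
  is_RInt_gen f (at_right 0) (Rbar_locally p_infty) l -> 0 <= l.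
Proof.
  intros Hex Hpos H.
  replace 0 with (RInt f 1 1) by apply (RInt_point (V:=R_CompleteNormedModule)).
  apply (gen_lower f); auto; lra.
Qed.

Lemma ball_R (x y e : R) : Rabs (y - x) < e -> ball x e y.
Proof. intros H. unfold ball; simpl; unfold AbsRing_ball, abs, minus, plus, opp; simpl. exact H. Qed.

Lemma ball_R' (x y e : R) : ball x e y -> Rabs (y - x) < e.
Proof. intros H. unfold ball in H; simpl in H; unfold AbsRing_ball, abs, minus, plus, opp in H; simpl in H. exact H. Qed.

Lemma flim_right0 (F : R -> R) (l : R) :
  (forall eps, 0 < eps -> exists d, 0 < d /\ forall t, 0 < t < d -> Rabs (F t - l) < eps) ->
  filterlim F (at_right 0) (locally l).
Proof.
  intros H P [eps He]. destruct (H eps (cond_pos eps)) as [d [Hd Ht]].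
  exists (mkposreal d Hd). intros y Hy Hy0. apply He. apply ball_R.
  apply ball_R' in Hy. simpl in Hy. rewrite Rminus_0_r in Hy. apply Ht.
  rewrite Rabs_right in Hy; lra.
Qed.

Lemma flim_pinfty (F : R -> R) (l : R) :
  (forall eps, 0 < eps -> exists M, forall t, M < t -> Rabs (F t - l) < eps) ->
  filterlim F (Rbar_locally p_infty) (locally l).
Proof.
  intros H P [eps He]. destruct (H eps (cond_pos eps)) as [M HM].
  exists M. intros y Hy. apply He. apply ball_R. auto.
Qed.

Lemma fprod_pos (P : R * R -> Prop) :
  (forall a b, 0 < a -> 0 < b -> P (a, b)) ->
  filter_prod (at_right 0) (Rbar_locally p_infty) P.
Proof.
  intros H. apply (Filter_prod _ _ _ (fun a => 0 < a) (fun b => 0 < b)).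
  - exists (mkposreal 1 Rlt_0_1). auto.
  - exists 0. auto.
  - auto.
Qed.

Lemma exp_neg_le1 t : 0 <= t -> exp (- t) <= 1.
Proof. intros. rewrite <- exp_0. apply exp_le_exp. lra. Qed.

Lemma gen_lin2 (f1 f2 : R -> R) (l1 l2 c : R) :
  is_RInt_gen f1 (at_right 0) (Rbar_locally p_infty) l1 ->
  is_RInt_gen f2 (at_right 0) (Rbar_locally p_infty) l2 ->
  is_RInt_gen (fun t => f1 t - c * f2 t) (at_right 0) (Rbar_locally p_infty) (l1 - c * l2).
Proof. intros H1 H2. exact (is_RInt_gen_minus _ _ _ _ H1 (is_RInt_gen_scal _ c _ H2)). Qed.

Lemma gen_uniq (f : R -> R) (l1 l2 : R) :
  is_RInt_gen f (at_right 0) (Rbar_locally p_infty) l1 ->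
  is_RInt_gen f (at_right 0) (Rbar_locally p_infty) l2 -> l1 = l2.
Proof.
  intros H1 H2.
  apply (is_RInt_gen_unique (V:=R_CompleteNormedModule)) in H1.
  apply (is_RInt_gen_unique (V:=R_CompleteNormedModule)) in H2.
  congruence.
Qed.

Lemma Gamma_succ s : 0 < s -> Gamma (s + 1) = s * Gamma s.
Proof.
  intros Hs.
  set (F := fun t => - (exp (s * ln t) * exp (- t))).
  set (g := fun t => gi (s + 1) t - s * gi s t).
  assert (HdF : forall x, 0 < x -> is_derive F x (g x)).
  { intros x Hx. unfold F, g, gi, Rpower. auto_derive. lra.
    replace (s + 1 - 1) with s by ring.
    replace ((s - 1) * ln x) with (s * ln x + - ln x) by ring.
    rewrite exp_plus, (exp_Ropp (ln x)), exp_ln by lra. field. lra. }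
  assert (HD : is_RInt_gen (Derive F) (at_right 0) (Rbar_locally p_infty) (0 - 0)).
  { apply is_RInt_gen_Derive.
    - apply fprod_pos. intros a b Ha Hb x Hx. simpl in Hx.
      assert (0 < x). { pose proof (Rmin_glb_lt a b 0). apply Rlt_le_trans with (Rmin a b). apply Rmin_glb_lt; lra. lra. }
      exists (g x). apply HdF; auto.
    - apply fprod_pos. intros a b Ha Hb x Hx. simpl in Hx.
      assert (Hx0 : 0 < x). { apply Rlt_le_trans with (Rmin a b). apply Rmin_glb_lt; lra. lra. }
      apply continuous_ext_loc with g.
      + assert (Hx2 : 0 < x / 2) by lra.
        exists (mkposreal _ Hx2). intros y Hy. apply ball_R' in Hy. simpl in Hy.
        apply Rabs_lt_between in Hy.
        symmetry. apply is_derive_unique. apply HdF. lra.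
      + apply (ex_derive_continuous (K:=R_AbsRing) (V:=R_NormedModule)).
        unfold g, gi, Rpower. auto_derive. lra.
    - apply flim_right0. intros eps Heps.
      exists (exp (ln eps / s)). split. apply exp_pos.
      intros t Ht. unfold F. rewrite Rminus_0_r, Rabs_Ropp.
      rewrite Rabs_right by (apply Rle_ge, Rlt_le, Rmult_lt_0_compat; apply exp_pos).
      apply Rle_lt_trans with (exp (s * ln t)).
      + rewrite <- (Rmult_1_r (exp (s * ln t))) at 2. apply Rmult_le_compat_l.
        apply Rlt_le, exp_pos. apply exp_neg_le1. lra.
      + rewrite <- (exp_ln eps) by auto. apply exp_increasing.
        assert (ln t < ln eps / s).
        { rewrite <- (ln_exp (ln eps / s)). apply ln_increasing; lra. }
        apply (Rmult_lt_compat_l s) in H; auto.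
        replace (s * (ln eps / s)) with (ln eps) in H by (field; lra). lra.
    - apply flim_pinfty. intros eps Heps.
      destruct (nat_above (s + 1 + 1)) as [n Hn].
      set (C := INR (fact n)).
      assert (HC : 0 < C) by (apply lt_0_INR, lt_O_fact).
      exists (Rmax 1 (C / eps)). intros t Ht.
      assert (Ht1 : 1 < t) by (eapply Rle_lt_trans; [apply Rmax_l|exact Ht]).
      assert (Ht2 : C / eps < t) by (eapply Rle_lt_trans; [apply Rmax_r|exact Ht]).
      pose proof (gi_pt_bound (s + 1) n t Hn ltac:(lra)) as Hb.
      unfold F. rewrite Rminus_0_r, Rabs_Ropp.
      rewrite Rabs_right by (apply Rle_ge, Rlt_le, Rmult_lt_0_compat; apply exp_pos).
      unfold gi, Rpower in Hb. replace (s + 1 - 1) with s in Hb by ring.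
      fold C in Hb.
      assert (HH : exp (s * ln t) * exp (- t) * t <= C) by nra.
      assert (HC2 : C < eps * t).
      { apply (Rmult_lt_compat_l eps) in Ht2; auto.
        replace (eps * (C / eps)) with C in Ht2 by (field; lra). lra. }
      set (X := exp (s * ln t) * exp (- t)) in *.
      apply Rmult_lt_reg_r with t. lra. lra. }
  assert (Hg : is_RInt_gen g (at_right 0) (Rbar_locally p_infty) (0 - 0)).
  { apply (is_RInt_gen_ext (Derive F)); [|exact HD].
    apply fprod_pos. intros a b Ha Hb x Hx. simpl in Hx.
    assert (Hx0 : 0 < x). { apply Rlt_le_trans with (Rmin a b). apply Rmin_glb_lt; lra. lra. }
    apply is_derive_unique, HdF; auto. }
  assert (H2 := gen_lin2 (gi (s + 1)) (gi s) _ _ s (Gamma_is (s + 1) ltac:(lra)) (Gamma_is s Hs)).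
  pose proof (gen_uniq _ _ _ Hg H2). lra.
Qed.

Lemma Gamma_1 : Gamma 1 = 1.
Proof.
  set (F := fun t => - exp (- t)).
  assert (HdF : forall x, is_derive F x (gi 1 x)).
  { intros x. unfold F, gi, Rpower. auto_derive. auto.
    replace ((1 - 1) * ln x) with 0 by ring. rewrite exp_0. ring. }
  assert (HD : is_RInt_gen (Derive F) (at_right 0) (Rbar_locally p_infty) (0 - (-1))).
  { apply is_RInt_gen_Derive.
    - apply fprod_pos. intros a b Ha Hb x Hx. exists (gi 1 x). apply HdF.
    - apply fprod_pos. intros a b Ha Hb x Hx. simpl in Hx.
      assert (Hx0 : 0 < x). { apply Rlt_le_trans with (Rmin a b). apply Rmin_glb_lt; lra. lra. }
      apply continuous_ext with (gi 1).
      + intros y. symmetry. apply is_derive_unique, HdF.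
      + apply (ex_derive_continuous (K:=R_AbsRing) (V:=R_NormedModule)).
        unfold gi, Rpower. auto_derive. auto.
    - apply flim_right0. intros eps Heps. exists eps. split; auto.
      intros t Ht. unfold F. pose proof (exp_ineq1_le (- t)). pose proof (exp_neg_le1 t ltac:(lra)).
      replace (- exp (- t) - -1) with (1 - exp (- t)) by ring. rewrite Rabs_right; lra.
    - apply flim_pinfty. intros eps Heps. exists (/ eps). intros t Ht.
      unfold F. pose proof (exp_ineq1_le t). pose proof (exp_pos (- t)).
      assert (E : exp (- t) * exp t = 1) by (rewrite <- exp_plus, Rplus_opp_l; apply exp_0).
      rewrite Rminus_0_r, Rabs_Ropp, Rabs_right by lra.
      assert (0 < t). { apply Rlt_trans with (/ eps); auto. apply Rinv_0_lt_compat; auto. }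
      assert (1 < eps * t).
      { apply (Rmult_lt_compat_l eps) in Ht; auto. rewrite Rinv_r in Ht; lra. }
      nra. }
  assert (Hg : is_RInt_gen (gi 1) (at_right 0) (Rbar_locally p_infty) (0 - (-1))).
  { apply (is_RInt_gen_ext (Derive F)); [|exact HD].
    apply fprod_pos. intros a b Ha Hb x Hx. apply is_derive_unique, HdF. }
  apply (is_RInt_gen_unique (V:=R_CompleteNormedModule)) in Hg.
  unfold Gamma. fold (gi 1). rewrite Hg. ring.
Qed.

Lemma Gamma_CS y lam : 0 < y ->
  0 <= Gamma y + 2 * lam * Gamma (y + / 2) + lam ^ 2 * Gamma (y + 1).
Proof.
  intros Hy.
  assert (H1 := Gamma_is y Hy).
  assert (H2 := Gamma_is (y + / 2) ltac:(lra)).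
  assert (H3 := Gamma_is (y + 1) ltac:(lra)).
  apply (is_RInt_gen_scal _ (2 * lam)) in H2.
  apply (is_RInt_gen_scal _ (lam ^ 2)) in H3.
  assert (H := is_RInt_gen_plus _ _ _ _ (is_RInt_gen_plus _ _ _ _ H1 H2) H3).
  apply gen_ge0 in H.
  - unfold plus, scal in H; simpl in H; unfold mult in H; simpl in H. lra.
  - intros a b Ha Hab. apply (ex_RInt_continuous (V:=R_CompleteNormedModule)).
    intros z Hz. rewrite Rmin_left in Hz by lra.
    apply (ex_derive_continuous (K:=R_AbsRing) (V:=R_NormedModule)).
    unfold plus, scal; simpl; unfold mult; simpl. unfold gi, Rpower. auto_derive. repeat split; lra.
  - intros t Ht. unfold plus, scal; simpl; unfold mult; simpl. unfold gi, Rpower.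
    set (u := exp ((y - 1) / 2 * ln t)).
    set (v := exp (y / 2 * ln t)).
    assert (Eu : exp ((y - 1) * ln t) = u * u) by (unfold u; rewrite <- exp_plus; f_equal; field).
    assert (Ev : exp ((y + 1 - 1) * ln t) = v * v) by (unfold v; rewrite <- exp_plus; f_equal; field).
    assert (Euv : exp ((y + / 2 - 1) * ln t) = u * v) by (unfold u, v; rewrite <- exp_plus; f_equal; field).
    rewrite Eu, Ev, Euv. pose proof (exp_pos (- t)).
    apply Rle_trans with ((u + lam * v) ^ 2 * exp (- t)).
    + apply Rmult_le_pos. apply pow2_ge_0. lra.
    + right. ring.
Qed.

Lemma Gamma_ratio_upper y : 0 < y -> Gamma (y + / 2) ^ 2 <= y * Gamma y ^ 2.
Proof.
  intros Hy.
  pose proof (Gamma_pos y Hy). pose proof (Gamma_pos (y + / 2) ltac:(lra)).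
  pose proof (Gamma_pos (y + 1) ltac:(lra)).
  pose proof (Gamma_CS y (- Gamma (y + / 2) / Gamma (y + 1)) Hy) as HC.
  rewrite Gamma_succ in * by auto.
  set (A := Gamma y) in *. set (B := Gamma (y + / 2)) in *.
  assert (E : A + 2 * (- B / (y * A)) * B + (- B / (y * A)) ^ 2 * (y * A)
            = (y * A * A - B * B) / (y * A)) by (field; split; lra).
  rewrite E in HC.
  assert (0 <= y * A * A - B * B).
  { apply Rmult_le_reg_r with (/ (y * A)). apply Rinv_0_lt_compat; nra.
    rewrite Rmult_0_l. exact HC. }
  nra.
Qed.

Lemma Gamma_ratio_lower y : 0 < y -> y ^ 2 * Gamma y ^ 2 <= (y + / 2) * Gamma (y + / 2) ^ 2.
Proof.
  intros Hy.
  pose proof (Gamma_ratio_upper (y + / 2) ltac:(lra)) as H.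
  replace (y + / 2 + / 2) with (y + 1) in H by field.
  rewrite Gamma_succ in H by auto. nra.
Qed.

Lemma ln_le_xm1 x : 0 < x -> ln x <= x - 1.
Proof.
  intros Hx. rewrite <- (ln_exp (x - 1)). apply ln_le; auto.
  pose proof (exp_ineq1_le (x - 1)). lra.
Qed.

Lemma ln_ge_1mx x : 0 < x -> 1 - / x <= ln x.
Proof.
  intros Hx. pose proof (ln_le_xm1 (/ x) (Rinv_0_lt_compat _ Hx)).
  rewrite ln_Rinv in H; lra.
Qed.

Lemma ln_step_bounds (n : nat) :
  / INR (S (S n)) <= ln (INR (S (S n))) - ln (INR (S n)) <= / INR (S n).
Proof.
  assert (H1 : 0 < INR (S n)) by (apply lt_0_INR; lia).
  assert (H2 : INR (S (S n)) = INR (S n) + 1) by (rewrite S_INR; ring).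
  rewrite <- ln_div by lra.
  split.
  - pose proof (ln_ge_1mx (INR (S (S n)) / INR (S n)) ltac:(apply Rdiv_lt_0_compat; lra)).
    replace (1 - / (INR (S (S n)) / INR (S n))) with (/ INR (S (S n))) in H by (rewrite H2; field; lra).
    auto.
  - pose proof (ln_le_xm1 (INR (S (S n)) / INR (S n)) ltac:(apply Rdiv_lt_0_compat; lra)).
    replace (INR (S (S n)) / INR (S n) - 1) with (/ INR (S n)) in H by (rewrite H2; field; lra).
    auto.
Qed.

Definition dseq (n : nat) : R := harmonic (S n) - ln (INR (S n)).

Lemma dseq_decr n : dseq (S n) <= dseq n.
Proof.
  unfold dseq. change (harmonic (S (S n))) with (harmonic (S n) + / INR (S (S n))).
  pose proof (ln_step_bounds n). lra.
Qed.

Lemma dseq_pos n : 0 <= dseq n.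
Proof.
  unfold dseq. induction n as [|n IH].
  - simpl. rewrite ln_1. lra.
  - change (harmonic (S (S n))) with (harmonic (S n) + / INR (S (S n))).
    pose proof (ln_step_bounds n).
    assert (G : forall m, ln (INR (S (S m))) <= harmonic (S m)).
    { induction m as [|m IHm].
      - simpl harmonic. pose proof (ln_step_bounds 0). simpl INR in *. rewrite ln_1 in H0. lra.
      - change (harmonic (S (S m))) with (harmonic (S m) + / INR (S (S m))).
        pose proof (ln_step_bounds (S m)). lra. }
    pose proof (G (S n)).
    change (harmonic (S (S n))) with (harmonic (S n) + / INR (S (S n))) in H0.
    pose proof (ln_step_bounds (S n)).
    assert (ln (INR (S (S n))) <= ln (INR (S (S (S n))))). 
    { apply ln_le. apply lt_0_INR; lia. apply le_INR; lia. }
    lra.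
Qed.

Lemma euler_lim : is_lim_seq (fun n => harmonic n - ln (INR n)) euler_gamma.
Proof.
  assert (Hex : ex_finite_lim_seq dseq).
  { apply (ex_finite_lim_seq_decr dseq 0). apply dseq_decr. apply dseq_pos. }
  destruct Hex as [l Hl].
  assert (H : is_lim_seq (fun n => harmonic n - ln (INR n)) l).
  { apply is_lim_seq_incr_1. exact Hl. }
  unfold euler_gamma. rewrite (is_lim_seq_unique _ _ H). simpl. exact H.
Qed.

Lemma ln_cont1 : continuity_pt ln 1.
Proof. apply derivable_continuous_pt. exists (/ 1). apply derivable_pt_lim_ln. lra. Qed.

Lemma lim_inv_S : is_lim_seq (fun n => / INR (S n)) 0.
Proof.
  assert (H := is_lim_seq_inv _ _ is_lim_seq_INR ltac:(discriminate)).
  simpl in H. apply is_lim_seq_incr_1 in H. exact H.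
Qed.

Lemma lim_1_plus c : is_lim_seq (fun n => 1 + c / INR (S n)) 1.
Proof.
  assert (H := is_lim_seq_plus' _ _ 1 (c*0) (is_lim_seq_const 1) (is_lim_seq_mult' _ _ c 0 (is_lim_seq_const c) lim_inv_S)).
  rewrite Rmult_0_r, Rplus_0_r in H. exact H.
Qed.

Lemma lim_ln_1_plus c : is_lim_seq (fun n => ln (1 + c / INR (S n))) 0.
Proof.
  rewrite <- ln_1. apply (is_lim_seq_continuous ln). apply ln_cont1. apply lim_1_plus.
Qed.

Lemma euler_lim_S : is_lim_seq (fun n => harmonic (S n) - ln (INR (S n)) - euler_gamma) 0.
Proof.
  replace 0 with (euler_gamma - euler_gamma) by ring.
  apply is_lim_seq_minus'. 2: apply is_lim_seq_const.
  apply (is_lim_seq_incr_1 (fun n => harmonic n - ln (INR n))). apply euler_lim.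
Qed.

Lemma merge_lim (v u : nat -> R) (l : R) :
  is_lim_seq (fun N => v (S (2 * N))) l -> is_lim_seq u 0 ->
  (forall n, v (S n) = v n + u (S n)) -> is_lim_seq v l.
Proof.
  intros Hv Hu Hs.
  apply is_lim_seq_spec in Hv. apply is_lim_seq_spec in Hu. apply is_lim_seq_spec.
  intros eps.
  assert (He2 : 0 < eps / 2) by (destruct eps; simpl; lra).
  destruct (Hv (mkposreal _ He2)) as [N1 H1].
  destruct (Hu (mkposreal _ He2)) as [N2 H2].
  exists (S (2 * (N1 + N2))). intros n Hn.
  destruct (Nat.Even_or_Odd n) as [[k Hk]|[k Hk]].
  - subst n. destruct k as [|k]. lia.
    replace (2 * S k)%nat with (S (S (2 * k))) by lia.
    rewrite Hs.
    specialize (H1 k ltac:(lia)). specialize (H2 (S (S (2 * k))) ltac:(lia)).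
    cbn [pos] in H1, H2. rewrite Rminus_0_r in H2.
    apply Rle_lt_trans with (Rabs (v (S (2 * k)) - l) + Rabs (u (S (S (2 * k))))).
    + replace (v (S (2 * k)) + u (S (S (2 * k))) - l) with ((v (S (2 * k)) - l) + u (S (S (2 * k)))) by ring.
      apply Rabs_triang.
    + lra.
  - subst n. replace (2 * k + 1)%nat with (S (2 * k)) by lia.
    specialize (H1 k ltac:(lia)). cbn [pos] in H1. lra.
Qed.

Section Series2.
Variable x : R.
Hypothesis Hx : 0 < x.

Definition aa (n : nat) : R := harmonic n - ln (INR n + x - 1) - euler_gamma.
Definition uu (m : nat) : R := (-1) ^ (S m) * aa (S m).

Definition TT (N : nat) : R :=
  harmonic N / 2 - ln (Gamma (INR N + (x + 1) / 2)) + ln (Gamma (INR N + x / 2))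
  + ln (Gamma ((x + 1) / 2)) - ln (Gamma (x / 2)).

Lemma TT_step N : TT (S N) = TT N + uu (2 * N) + uu (S (2 * N)).
Proof.
  unfold TT, uu, aa.
  rewrite pow_1_odd. replace (S (S (2 * N))) with (2 * S N)%nat by lia. rewrite pow_1_even.
  replace (S (2 * N)) with (2 * N + 1)%nat by lia.
  replace (2 * S N)%nat with (2 * N + 2)%nat by lia.
  replace (harmonic (S N)) with (harmonic N + / INR (S N)) by reflexivity.
  replace (harmonic (2 * N + 2)%nat) with (harmonic (2 * N + 1)%nat + / INR (2 * N + 2)).
  2:{ replace (2 * N + 2)%nat with (S (2 * N + 1)) by lia. reflexivity. }
  rewrite S_INR.
  assert (HN : 0 <= INR N) by apply pos_INR.
  replace (INR N + 1 + (x + 1) / 2) with ((INR N + (x + 1) / 2) + 1) by ring.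
  replace (INR N + 1 + x / 2) with ((INR N + x / 2) + 1) by ring.
  rewrite !Gamma_succ by lra.
  pose proof (Gamma_pos (INR N + (x + 1) / 2) ltac:(lra)).
  pose proof (Gamma_pos (INR N + x / 2) ltac:(lra)).
  rewrite !ln_mult by lra.
  replace (INR (2 * N + 2)) with (2 * (INR N + 1)) by (rewrite plus_INR, mult_INR; simpl; ring).
  replace (INR (2 * N + 1)) with (2 * INR N + 1) by (rewrite plus_INR, mult_INR; simpl; ring).
  replace (2 * (INR N + 1) + x - 1) with (2 * (INR N + (x + 1) / 2)) by field.
  replace (2 * INR N + 1 + x - 1) with (2 * (INR N + x / 2)) by field.
  rewrite !ln_mult by lra.
  field. lra.
Qed.


Lemma TT_0 : TT 0 = 0.
Proof. unfold TT. simpl harmonic. rewrite !Rplus_0_l. unfold Rdiv. ring. Qed.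

Definition VV : R := euler_gamma / 2 + ln (Gamma ((x + 1) / 2)) - ln (Gamma (x / 2)).

Lemma TT_lim : is_lim_seq (fun N => TT (S N)) VV.
Proof.
  set (M := fun N : nat => INR (S N)).
  set (rho := fun N => Gamma (M N + x / 2 + / 2) ^ 2 / (M N * Gamma (M N + x / 2) ^ 2)).
  assert (HM : forall N, 1 <= M N).
  { intros N. unfold M. rewrite S_INR. pose proof (pos_INR N). lra. }
  assert (Hrho : is_lim_seq rho 1).
  { apply is_lim_seq_le_le with
      (u := fun N => (1 + (x / 2) / INR (S N)) * (1 + (x / 2) / INR (S N)) / (1 + (x / 2 + / 2) / INR (S N)))
      (w := fun N => 1 + (x / 2) / INR (S N)).
    - intros N. fold (M N). specialize (HM N).
      set (y := M N + x / 2). assert (Hy : 0 < y) by (unfold y; lra).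
      pose proof (Gamma_ratio_upper y ltac:(unfold y; lra)).
      pose proof (Gamma_ratio_lower y ltac:(unfold y; lra)).
      pose proof (Gamma_pos y ltac:(unfold y; lra)).
      pose proof (Gamma_pos (y + / 2) ltac:(unfold y; lra)).
      unfold rho. fold y.
      set (A := Gamma y) in *. set (B := Gamma (y + / 2)) in *.
      split.
      + replace ((1 + x / 2 / M N) * (1 + x / 2 / M N) / (1 + (x / 2 + / 2) / M N))
          with (y ^ 2 / ((y + / 2) * M N)) by (unfold y; field; lra).
        apply Rmult_le_reg_r with ((y + / 2) * M N * A ^ 2).
        { apply Rmult_lt_0_compat. nra. apply pow_lt; lra. }
        unfold Rdiv. 
        replace (y ^ 2 * / ((y + / 2) * M N) * ((y + / 2) * M N * A ^ 2)) with (y ^ 2 * A ^ 2) by (field; split; lra).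
        replace (B ^ 2 * / (M N * A ^ 2) * ((y + / 2) * M N * A ^ 2)) with ((y + / 2) * B ^ 2) by (field; split; lra).
        lra.
      + replace (1 + x / 2 / M N) with (y / M N) by (unfold y; field; lra).
        apply Rmult_le_reg_r with (M N * A ^ 2).
        { apply Rmult_lt_0_compat. lra. apply pow_lt; lra. }
        unfold Rdiv.
        replace (B ^ 2 * / (M N * A ^ 2) * (M N * A ^ 2)) with (B ^ 2) by (field; split; lra).
        replace (y * / M N * (M N * A ^ 2)) with (y * A ^ 2) by (field; lra).
        lra.
    - assert (H := is_lim_seq_div' _ _ _ _ (is_lim_seq_mult' _ _ _ _ (lim_1_plus (x / 2)) (lim_1_plus (x / 2))) (lim_1_plus (x / 2 + / 2)) ltac:(lra)).
      replace (1 * 1 / 1) with 1 in H by field. exact H.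
    - apply lim_1_plus. }
  assert (Hlnrho : is_lim_seq (fun N => ln (rho N)) 0).
  { rewrite <- ln_1. apply (is_lim_seq_continuous ln). apply ln_cont1. exact Hrho. }
  assert (Hd : is_lim_seq (fun N => harmonic (S N) - ln (M N)) euler_gamma).
  { apply (is_lim_seq_incr_1 (fun n => harmonic n - ln (INR n))). apply euler_lim. }
  assert (H := is_lim_seq_plus' _ _ _ _ (is_lim_seq_mult' _ _ _ _ (is_lim_seq_const (/ 2)) Hd) (is_lim_seq_mult' _ _ _ _ (is_lim_seq_const (- / 2)) Hlnrho)).
  apply is_lim_seq_plus' with (v := fun _ => ln (Gamma ((x + 1) / 2)) - ln (Gamma (x / 2))) (l2 := ln (Gamma ((x + 1) / 2)) - ln (Gamma (x / 2))) in H.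
  2: apply is_lim_seq_const.
  replace VV with (/ 2 * euler_gamma + - / 2 * 0 + (ln (Gamma ((x + 1) / 2)) - ln (Gamma (x / 2)))) by (unfold VV; field).
  apply is_lim_seq_ext with (2 := H).
  intros N. specialize (HM N). unfold TT, rho. fold (M N).
  replace (M N + (x + 1) / 2) with (M N + x / 2 + / 2) by field.
  pose proof (Gamma_pos (M N + x / 2) ltac:(lra)).
  pose proof (Gamma_pos (M N + x / 2 + / 2) ltac:(lra)).
  rewrite ln_div, ln_mult by (try apply Rmult_lt_0_compat; try apply pow_lt; lra).
  rewrite !ln_pow by lra.
  simpl INR. field.
Qed.

Lemma uu_lim : is_lim_seq uu 0.
Proof.
  apply is_lim_seq_abs_0.
  apply is_lim_seq_ext with (fun m => Rabs (aa (S m))).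
  { intros m. unfold uu. rewrite Rabs_mult, pow_1_abs. ring. }
  apply -> is_lim_seq_abs_0.
  assert (H := is_lim_seq_minus' _ _ _ _ euler_lim_S (lim_ln_1_plus (x - 1))).
  rewrite Rminus_0_r in H.
  apply is_lim_seq_ext with (2 := H).
  intros m. unfold aa.
  assert (Hm : 1 <= INR (S m)) by (rewrite S_INR; pose proof (pos_INR m); lra).
  replace (1 + (x - 1) / INR (S m)) with ((INR (S m) + x - 1) / INR (S m)) by (field; lra).
  rewrite ln_div by lra. ring.
Qed.

Lemma series2 : is_series uu VV.
Proof.
  unfold is_series.
  apply (merge_lim (sum_n uu) uu VV).
  - apply is_lim_seq_ext with (2 := TT_lim).
    intros N. induction N as [|N IH].
    + rewrite sum_Sn, sum_O. pose proof (TT_step 0) as H. rewrite TT_0 in H. simpl in H.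
      rewrite H. unfold plus; simpl. ring.
    + replace (S (2 * S N)) with (S (S (S (2 * N)))) by lia.
      rewrite sum_Sn, sum_Sn, <- IH. rewrite TT_step.
      replace (2 * S N)%nat with (S (S (2 * N))) by lia. unfold plus; simpl. ring.
  - apply uu_lim.
  - intros n. rewrite sum_Sn. reflexivity.
Qed.

End Series2.

Local Opaque PI.

Definition WI (n : nat) : R := RInt (fun t => sin t ^ n) 0 (PI / 2).

Lemma sinpow_cont n t : continuous (fun t => sin t ^ n) t.
Proof. apply (ex_derive_continuous (K:=R_AbsRing) (V:=R_NormedModule)). auto_derive. auto. Qed.

Lemma WI_is n : is_RInt (fun t => sin t ^ n) 0 (PI / 2) (WI n).
Proof.
  apply (RInt_correct (V:=R_CompleteNormedModule)).
  apply (ex_RInt_continuous (V:=R_CompleteNormedModule)). intros; apply sinpow_cont.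
Qed.

Lemma WI_rec n : INR (S (S n)) * WI (S (S n)) = INR (S n) * WI n.
Proof.
  set (df := fun t => INR (S n) * sin t ^ n - INR (S (S n)) * sin t ^ (S (S n))).
  assert (H1 : is_RInt df 0 (PI / 2) (INR (S n) * WI n - INR (S (S n)) * WI (S (S n)))).
  { exact (is_RInt_minus (V:=R_NormedModule) _ _ _ _ _ _ (is_RInt_scal (V:=R_NormedModule) _ _ _ _ _ (WI_is n)) (is_RInt_scal (V:=R_NormedModule) _ _ _ _ _ (WI_is (S (S n))))). }
  assert (H2 : is_RInt df 0 (PI / 2) (minus (cos (PI / 2) * sin (PI / 2) ^ S n) (cos 0 * sin 0 ^ S n))).
  { apply (is_RInt_derive (V:=R_CompleteNormedModule) (fun t => cos t * sin t ^ S n)).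
    - intros x _. unfold df.
      auto_derive. auto. cbn [Init.Nat.pred].
      assert (Hc : cos x * cos x = 1 - sin x * sin x).
      { pose proof (sin2_cos2 x). unfold Rsqr in H. lra. }
      set (s := sin x) in *. set (c := cos x) in *.
      replace (s ^ S (S n)) with (s * s * s ^ n) by (simpl; ring).
      change (match n with 0%nat => 1 | S _ => INR n + 1 end) with (INR (S n)).
      replace (c * (1 * c * (INR (S n) * s ^ n))) with ((c * c) * (INR (S n) * s ^ n)) by ring.
      rewrite Hc. rewrite !S_INR. ring.
    - intros x _. apply (ex_derive_continuous (K:=R_AbsRing) (V:=R_NormedModule)).
      unfold df. auto_derive. auto. }
  rewrite cos_PI2, sin_0 in H2.
  assert (Z : minus (0 * sin (PI/2) ^ S n) (cos 0 * 0 ^ S n) = 0) by (unfold minus, plus, opp; simpl; ring).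
  rewrite Z in H2.
  apply (is_RInt_unique (V:=R_CompleteNormedModule)) in H1.
  apply (is_RInt_unique (V:=R_CompleteNormedModule)) in H2.
  rewrite H1 in H2. lra.
Qed.

Lemma WI_0 : WI 0 = PI / 2.
Proof.
  unfold WI. simpl. rewrite (RInt_const (V:=R_CompleteNormedModule)).
  unfold scal; simpl; unfold mult; simpl. ring.
Qed.

Lemma WI_1 : WI 1 = 1.
Proof.
  assert (H : is_RInt (fun t => sin t ^ 1) 0 (PI / 2) (minus (- cos (PI / 2)) (- cos 0))).
  { apply (is_RInt_derive (V:=R_CompleteNormedModule) (fun t => - cos t)).
    - intros x _. auto_derive. auto. ring.
    - intros x _. apply sinpow_cont. }
  apply (is_RInt_unique (V:=R_CompleteNormedModule)) in H. unfold WI. rewrite H.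
  rewrite cos_PI2, cos_0. unfold minus, plus, opp; simpl. ring.
Qed.

Lemma WI_decr n : WI (S n) <= WI n.
Proof.
  unfold WI. apply RInt_le.
  - pose proof PI_RGT_0; lra.
  - apply (ex_RInt_continuous (V:=R_CompleteNormedModule)). intros; apply sinpow_cont.
  - apply (ex_RInt_continuous (V:=R_CompleteNormedModule)). intros; apply sinpow_cont.
  - intros t Ht. pose proof PI_RGT_0.
    assert (0 <= sin t) by (apply sin_ge_0; lra).
    pose proof (SIN_bound t).
    simpl. pose proof (pow_le (sin t) n H0). nra.
Qed.

Lemma WI_posS n0 : 0 < WI n0 -> 0 < WI (S (S n0)).
Proof.
  intros H1.
  pose proof (WI_rec n0) as E.
  assert (A1 : 0 < INR (S (S n0))) by (apply lt_0_INR; lia).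
  assert (A2 : 0 < INR (S n0)) by (apply lt_0_INR; lia).
  apply Rmult_lt_reg_l with (INR (S (S n0))). exact A1.
  rewrite Rmult_0_r. rewrite E. apply Rmult_lt_0_compat. exact A2. exact H1.
Qed.

Lemma WI_pos2 m : 0 < WI m /\ 0 < WI (S m).
Proof.
  induction m as [|m IH].
  - rewrite WI_0, WI_1. pose proof PI_RGT_0. split; lra.
  - destruct IH as [H1 H2]. split. exact H2. apply WI_posS. exact H1.
Qed.

Lemma WI_pos n : 0 < WI n.
Proof. exact (proj1 (WI_pos2 n)). Qed.

Lemma WI_prod n : INR (S n) * WI n * WI (S n) = PI / 2.
Proof.
  induction n as [|n IH].
  - rewrite WI_0, WI_1. change (INR 1) with 1. field.
  - pose proof (WI_rec n) as H. transitivity (INR (S n) * WI n * WI (S n)); [|exact IH].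
    replace (INR (S (S n)) * WI (S n) * WI (S (S n))) with (WI (S n) * (INR (S (S n)) * WI (S (S n)))) by ring.
    rewrite H. ring.
Qed.

Lemma WI_Gamma N : WI (2 * N) * Gamma (/ 2) * Gamma (INR N + 1) = PI / 2 * Gamma (INR N + / 2).
Proof.
  induction N as [|N IH].
  - change (2 * 0)%nat with 0%nat. change (INR 0) with 0. rewrite WI_0, Rplus_0_l, Rplus_0_l, Gamma_1. ring.
  - replace (2 * S N)%nat with (S (S (2 * N))) by lia.
    pose proof (WI_rec (2 * N)) as H.
    rewrite S_INR. pose proof (pos_INR N).
    replace (INR N + 1 + / 2) with ((INR N + / 2) + 1) by ring.
    rewrite (Gamma_succ (INR N + 1)) by lra. rewrite (Gamma_succ (INR N + / 2)) by lra.
    replace (INR (S (S (2 * N)))) with (2 * INR N + 2) in H by (rewrite !S_INR, mult_INR; simpl; ring).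
    replace (INR (S (2 * N))) with (2 * INR N + 1) in H by (rewrite !S_INR, mult_INR; simpl; ring).
    assert (E : WI (S (S (2 * N))) = (2 * INR N + 1) / (2 * INR N + 2) * WI (2 * N)).
    { apply Rmult_eq_reg_l with (2 * INR N + 2). rewrite H. field. lra. lra. }
    transitivity ((INR N + / 2) * (WI (2 * N) * Gamma (/ 2) * Gamma (INR N + 1))).
    + rewrite E. field. lra.
    + rewrite IH. ring.
Qed.

Lemma Gamma_half_bounds K :
  let N := INR (S K) in
  PI * N <= Gamma (/ 2) ^ 2 * (N + / 2) /\ Gamma (/ 2) ^ 2 * (N + / 2) <= PI * (N + 1).
Proof.
  intros N.
  assert (HN : 1 <= N) by (unfold N; rewrite S_INR; pose proof (pos_INR K); lra).
  pose proof (WI_Gamma (S K)) as E. fold N in E.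
  replace (2 * S K)%nat with (S (S (2 * K))) in E by lia.
  pose proof (WI_prod (S (2 * K))) as P1.
  pose proof (WI_prod (S (S (2 * K)))) as P2.
  replace (INR (S (S (2 * K)))) with (2 * N) in P1 by (unfold N; rewrite !S_INR, mult_INR; simpl; ring).
  replace (INR (S (S (S (2 * K))))) with (2 * N + 1) in P2 by (unfold N; rewrite !S_INR, mult_INR; simpl; ring).
  pose proof (WI_decr (S (2 * K))) as D1.
  pose proof (WI_decr (S (S (2 * K)))) as D2.
  pose proof (WI_pos (S (2 * K))). pose proof (WI_pos (S (S (2 * K)))). pose proof (WI_pos (S (S (S (2 * K))))).
  set (Wm := WI (S (2 * K))) in *. set (Wn := WI (S (S (2 * K)))) in *. set (Wp := WI (S (S (S (2 * K))))) in *.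
  pose proof (Gamma_ratio_upper (N + / 2) ltac:(lra)) as U.
  pose proof (Gamma_ratio_lower (N + / 2) ltac:(lra)) as L.
  replace (N + / 2 + / 2) with (N + 1) in U by field.
  pose proof (Gamma_pos (/ 2) ltac:(lra)). pose proof (Gamma_pos (N + / 2) ltac:(lra)).
  pose proof (Gamma_pos (N + 1) ltac:(lra)).
  set (g := Gamma (/ 2)) in *. set (G1 := Gamma (N + / 2)) in *. set (G2 := Gamma (N + 1)) in *.
  pose proof PI_RGT_0 as Hpi.
  assert (Sq : g ^ 2 * (Wn ^ 2 * G2 ^ 2) = (PI / 2) ^ 2 * G1 ^ 2).
  { replace ((PI / 2) ^ 2 * G1 ^ 2) with ((PI / 2 * G1) ^ 2) by ring. rewrite <- E. ring. }
  replace (N + / 2 + / 2) with (N + 1) in L by field. fold G2 in L.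
  assert (G1p : 0 < G1 ^ 2) by (apply pow_lt; lra).
  assert (G2p : 0 < G2 ^ 2) by (apply pow_lt; lra).
  assert (gp : 0 < g ^ 2) by (apply pow_lt; lra).
  split.
  - assert (A : 4 * N * Wn ^ 2 <= PI).
    { assert (Wn * Wn <= Wm * Wn) by (apply Rmult_le_compat_r; lra). nra. }
    assert (B1 : PI * PI * N * G1 ^ 2 = g ^ 2 * G2 ^ 2 * (4 * N * Wn ^ 2)).
    { replace (g ^ 2 * G2 ^ 2 * (4 * N * Wn ^ 2)) with (4 * N * (g ^ 2 * (Wn ^ 2 * G2 ^ 2))) by ring.
      rewrite Sq. field. }
    assert (B2 : g ^ 2 * G2 ^ 2 * (4 * N * Wn ^ 2) <= g ^ 2 * G2 ^ 2 * PI).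
    { apply Rmult_le_compat_l; auto. nra. }
    assert (B : PI * N * G1 ^ 2 <= g ^ 2 * G2 ^ 2).
    { apply Rmult_le_reg_l with PI. lra. nra. }
    assert (C : g ^ 2 * G2 ^ 2 <= g ^ 2 * ((N + / 2) * G1 ^ 2)).
    { apply Rmult_le_compat_l; lra. }
    apply Rmult_le_reg_r with (G1 ^ 2); auto. nra.
  - assert (A : PI <= 2 * (2 * N + 1) * Wn ^ 2).
    { assert (Wn * Wp <= Wn * Wn) by (apply Rmult_le_compat_l; lra). nra. }
    assert (B1 : (2 * N + 1) * PI * PI * G1 ^ 2 / 2 = g ^ 2 * G2 ^ 2 * (2 * (2 * N + 1) * Wn ^ 2)).
    { replace (g ^ 2 * G2 ^ 2 * (2 * (2 * N + 1) * Wn ^ 2)) with (2 * (2 * N + 1) * (g ^ 2 * (Wn ^ 2 * G2 ^ 2))) by ring.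
      rewrite Sq. field. }
    assert (B2 : g ^ 2 * G2 ^ 2 * PI <= g ^ 2 * G2 ^ 2 * (2 * (2 * N + 1) * Wn ^ 2)).
    { apply Rmult_le_compat_l; auto. nra. }
    assert (B : g ^ 2 * G2 ^ 2 <= PI * (N + / 2) * G1 ^ 2).
    { apply Rmult_le_reg_l with PI. lra. nra. }
    assert (C : g ^ 2 * G2 ^ 2 * (N + / 2) <= PI * (N + 1) * G2 ^ 2).
    { apply Rle_trans with (PI * (N + / 2) * G1 ^ 2 * (N + / 2)).
      apply Rmult_le_compat_r; lra.
      replace (PI * (N + / 2) * G1 ^ 2 * (N + / 2)) with (PI * ((N + / 2) ^ 2 * G1 ^ 2)) by ring.
      replace (PI * (N + 1) * G2 ^ 2) with (PI * ((N + 1) * G2 ^ 2)) by ring.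
      apply Rmult_le_compat_l; lra. }
    apply Rmult_le_reg_r with (G2 ^ 2); auto. nra.
Qed.

Lemma Gamma_half_sq : Gamma (/ 2) ^ 2 = PI.
Proof.
  set (c := Gamma (/ 2) ^ 2).
  assert (Hl : is_lim_seq (fun K => PI / (1 + / 2 / INR (S K))) PI).
  { assert (H := is_lim_seq_div' _ _ _ _ (is_lim_seq_const PI) (lim_1_plus (/ 2)) ltac:(lra)).
    replace (PI / 1) with PI in H by field. exact H. }
  assert (Hu : is_lim_seq (fun K => PI * (1 + 1 / INR (S K)) / (1 + / 2 / INR (S K))) PI).
  { assert (H := is_lim_seq_div' _ _ _ _ (is_lim_seq_mult' _ _ _ _ (is_lim_seq_const PI) (lim_1_plus 1)) (lim_1_plus (/ 2)) ltac:(lra)).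
    replace (PI * 1 / 1) with PI in H by field. exact H. }
  assert (Hb : forall K, PI / (1 + / 2 / INR (S K)) <= c /\ c <= PI * (1 + 1 / INR (S K)) / (1 + / 2 / INR (S K))).
  { intros K. destruct (Gamma_half_bounds K) as [H1 H2].
    set (N := INR (S K)) in *.
    assert (HN : 1 <= N) by (unfold N; rewrite S_INR; pose proof (pos_INR K); lra).
    fold c in H1, H2.
    replace (PI / (1 + / 2 / N)) with (PI * N / (N + / 2)) by (field; lra).
    replace (PI * (1 + 1 / N) / (1 + / 2 / N)) with (PI * (N + 1) / (N + / 2)) by (field; lra).
    split.
    - apply Rmult_le_reg_r with (N + / 2). lra. unfold Rdiv. rewrite Rmult_assoc, Rinv_l, Rmult_1_r by lra. lra.
    - apply Rmult_le_reg_r with (N + / 2). lra. unfold Rdiv. rewrite (Rmult_assoc (PI * (N + 1))), Rinv_l, Rmult_1_r by lra. lra. }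
  apply Rle_antisym.
  - assert (H := is_lim_seq_le _ _ _ _ (fun K => proj2 (Hb K)) (is_lim_seq_const c) Hu). exact H.
  - assert (H := is_lim_seq_le _ _ _ _ (fun K => proj1 (Hb K)) Hl (is_lim_seq_const c)). exact H.
Qed.

Lemma ln_Gamma_half : ln (Gamma (/ 2)) = ln PI / 2.
Proof.
  pose proof (Gamma_pos (/ 2) ltac:(lra)).
  rewrite <- Gamma_half_sq. rewrite ln_pow by auto. replace (INR 2) with 2 by (simpl; ring). field.
Qed.

Lemma part2 (x : R) : 0 < x ->
  is_series
    (fun m : nat => (-1) ^ (S m) * (harmonic (S m) - ln (INR (S m) + x - 1) - euler_gamma))
    (euler_gamma / 2 + ln (Gamma ((x + 1) / 2) / Gamma (x / 2))).
Proof.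
  intros Hx.
  pose proof (Gamma_pos ((x + 1) / 2) ltac:(lra)). pose proof (Gamma_pos (x / 2) ltac:(lra)).
  rewrite ln_div by auto.
  replace (euler_gamma / 2 + (ln (Gamma ((x + 1) / 2)) - ln (Gamma (x / 2)))) with (VV x) by (unfold VV; ring).
  apply (series2 x Hx).
Qed.

Fixpoint sumU (k : nat) (m : nat) : R :=
  match k with O => 0 | S j => sumU j m + uu (INR (S j)) m end.
Fixpoint sumV (k : nat) : R :=
  match k with O => 0 | S j => sumV j + VV (INR (S j)) end.

Lemma sumU_series k : is_series (sumU k) (sumV k).
Proof.
  induction k as [|k IH].
  - assert (H := is_series_scal 0 _ _ (series2 1 ltac:(lra))).
    apply is_series_ext with (b := sumU 0) in H.
    + replace (sumV 0) with (scal 0 (VV 1)). exact H. unfold scal; simpl; unfold mult; simpl. ring.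
    + intros n. unfold scal; simpl; unfold mult; simpl. ring.
  - apply (is_series_plus _ _ _ _ IH (series2 (INR (S k)) ltac:(apply lt_0_INR; lia))).
Qed.

Lemma rising_pos n k : 0 < n -> 0 < rising n k.
Proof.
  intros Hn. induction k as [|k IH]; simpl. lra.
  apply Rmult_lt_0_compat; auto. pose proof (pos_INR k). lra.
Qed.

Lemma sumU_eq k m : sumU k m =
  (-1) ^ (S m) * (INR k * (harmonic (S m) - euler_gamma) - ln (rising (INR (S m)) k)).
Proof.
  assert (Hm : 0 < INR (S m)) by (apply lt_0_INR; lia).
  induction k as [|k IH].
  - cbn [sumU rising]. rewrite ln_1. change (INR 0) with 0. ring.
  - cbn [sumU rising]. rewrite IH. unfold uu, aa.
    rewrite ln_mult. 2: apply rising_pos; auto. 2: pose proof (pos_INR k); lra.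
    replace (INR (S m) + INR (S k) - 1) with (INR (S m) + INR k) by (rewrite (S_INR k); ring).
    rewrite (S_INR k). ring.
Qed.

Lemma sumV_eq k : sumV k = INR k * (euler_gamma / 2) + ln (Gamma ((INR k + 1) / 2)) - ln (Gamma (/ 2)).
Proof.
  induction k as [|k IH].
  - cbn [sumV]. change (INR 0) with 0. replace ((0 + 1) / 2) with (/ 2) by field. ring.
  - cbn [sumV]. rewrite IH. unfold VV.
    replace (INR (S k) / 2) with ((INR k + 1) / 2) by (rewrite S_INR; ring).
    rewrite (S_INR k). ring.
Qed.

Lemma part1 (k : nat) : (1 <= k)%nat ->
  is_series
    (fun m : nat => (-1) ^ (S m) * (harmonic (S m) - ln (rising (INR (S m)) k) / INR k - euler_gamma))
    (euler_gamma / 2 - ln PI / (2 * INR k) + / INR k * ln (Gamma ((INR k + 1) / 2))).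
Proof.
  intros Hk.
  assert (HK : 0 < INR k) by (apply lt_0_INR; lia).
  assert (H := is_series_scal (/ INR k) _ _ (sumU_series k)).
  assert (EV : / INR k * sumV k = euler_gamma / 2 - ln PI / (2 * INR k) + / INR k * ln (Gamma ((INR k + 1) / 2))).
  { rewrite sumV_eq, ln_Gamma_half. field. lra. }
  assert (EU : forall n, / INR k * sumU k n = (-1) ^ (S n) * (harmonic (S n) - ln (rising (INR (S n)) k) / INR k - euler_gamma)).
  { intros n. rewrite sumU_eq. field. lra. }
  apply is_series_ext with (b := fun m => (-1) ^ (S m) * (harmonic (S m) - ln (rising (INR (S m)) k) / INR k - euler_gamma)) in H.
  - rewrite <- EV. exact H.
  - intros n. exact (EU n).
Qed.

Theorem mainTheorem11 :
  (forall k : nat, (1 <= k)%nat ->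
     is_series
       (fun m : nat =>
          (-1) ^ (S m) *
          (harmonic (S m) - ln (rising (INR (S m)) k) / INR k - euler_gamma))
       (euler_gamma / 2 - ln PI / (2 * INR k)
        + / INR k * ln (Gamma ((INR k + 1) / 2))))
  /\
  (forall x : R, 0 < x ->
     is_series
       (fun m : nat =>
          (-1) ^ (S m) *
          (harmonic (S m) - ln (INR (S m) + x - 1) - euler_gamma))
       (euler_gamma / 2 + ln (Gamma ((x + 1) / 2) / Gamma (x / 2)))).
Proof.
  split. exact part1. exact part2.
Qed.
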